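(* Consider $N$ independent channels, each a two-state Markov chain with common transition matrix $\mathbf{P}$, and let $i\in\{1,2\}$. There is a constant $C_i(\mathbf{P})$, depending only on $\mathbf{P}$ and the policy $\pi_i$, such that for any initial belief vector $\Omega(1)$ and any positive integer $M$, $$\Big|\mathbb{E}^{\pi_i}\Big[\sum_{t=1}^{M}Y^{\pi_i}(\mathbf{P},\Omega(1),t)\Big]-M\cdot U_i(\mathbf{P})\Big|<C_i(\mathbf{P}).$$
   Context: Time is slotted. The state $S_k(t)\in\{0,1\}$ of channel $k$ evolves as a two-state Markov chain with transition matrix $\mathbf{P}=(p_{xy})$, $p_{xy}=\Pr(S_k(t+1)=y\mid S_k(t)=x)$, independently across channels. In each slot a user senses one channel, observes its state, and receives reward equal to that state. $\Omega(1)=[\omega_1(1),\dots,\omega_N(1)]$ is the initial belief vector, $\omega_k(1)=\Pr(S_k(1)=1)$. $Y^{\pi}(\mathbf{P},\Omega(1),t)$ denotes the reward at time $t$ under policy $\pi$. Policies: a circular order $\kappa=(n_1,\dots,n_N)$ is identified with its cyclic shifts; $-\kappa$ is the reversed order and $k^+_\kappa$ the channel following $k$ in $\kappa$. Let $\kappa(1)=(n_1,\dots,n_N)$ with $\omega_{n_1}(1)\le\cdots\le\omega_{n_N}(1)$ and $\hat a(1)=\arg\max_k\omega_k(1)$. Policy $\pi_1$: for $t>1$, $\hat a(t)=\hat a(t-1)$ if $S_{\hat a(t-1)}(t-1)=1$, else $\hat a(t)=\hat a(t-1)^+_{\kappa(1)}$. Policy $\pi_2$: for $t>1$, $\hat a(t)=\hat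 a(t-1)$ if $S_{\hat a(t-1)}(t-1)=0$, else $\hat a(t)=\hat a(t-1)^+_{\kappa(t)}$, where $\kappa(t)=\kappa(1)$ for odd $t$ and $\kappa(t)=-\kappa(1)$ for even $t$. $U_i(\mathbf{P})=\lim_{T\to\infty}\frac1T\mathbb{E}^{\pi_i}\big[\sum_{t=1}^T Y^{\pi_i}(\mathbf{P},\Omega(1),t)\big]$ is the steady-state average expected reward of $\pi_i$; this limit exists and does not depend on $\Omega(1)$. *)

(* Defs.v *)
From HB Require Import structures.
From mathcomp Require Import all_boot all_order all_fingroup all_algebra.
From mathcomp Require Import all_classical all_reals all_analysis.
Set Implicit Arguments. Unset Strict Implicit. Unset Printing Implicit Defensive.
Import Order.TTheory GRing.Theory Num.Theory.
Local Open Scope ring_scope.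

(* Channel states: true = state 1, false = state 0.
   A transition matrix P : bool -> bool -> R, P x y = p_{xy}. *)
Definition stochastic (R : realType) (P : bool -> bool -> R) : Prop :=
  (forall x y, 0 <= P x y) /\ (forall x, P x false + P x true = 1).

(* A circular order kappa = (n_1,...,n_N) on the channels 'I_N is represented
   by a permutation s : position -> channel (s j = n_{j+1}).
   k^+_kappa is the next channel in kappa; the next channel in -kappa is the
   previous channel in kappa. *)
Definition succ_in (N : nat) (s : {perm 'I_N}) (k : 'I_N) : 'I_N :=
  s (ordS ((s^-1)%g k)).
Definition pred_in (N : nat) (s : {perm 'I_N}) (k : 'I_N) : 'I_N :=
  s (ord_pred ((s^-1)%g k)).

Inductive policy := Pi1 | Pi2.

(* Channel sensed at slot u+1 (u = 0,1,... is 0-indexed time), given the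
   realized channel states x : nat -> 'I_N -> bool (x u k = S_k(u+1)),
   the order kappa(1) (= s) and the initial channel a1. *)
Fixpoint sensed (N : nat) (pol : policy) (s : {perm 'I_N}) (a1 : 'I_N)
    (x : nat -> 'I_N -> bool) (u : nat) : 'I_N :=
  match u with
  | 0 => a1
  | u'.+1 =>
    let a := sensed pol s a1 x u' in
    match pol with
    | Pi1 => if x u' a then a else succ_in s a
    | Pi2 => if x u' a
             then (if odd u then pred_in s a   (* paper time u+1 even: -kappa(1) *)
                   else succ_in s a)           (* paper time u+1 odd: kappa(1) *)
             else a
    end
  end.

Definition ext_traj (M N : nat) (x : {ffun 'I_M -> {ffun 'I_N -> bool}})
  : nat -> 'I_N -> bool :=
  fun u k => if (insub u : option 'I_M) is Some i then x i k else false.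

Definition init_prob (R : realType) (w : R) (b : bool) : R :=
  if b then w else 1 - w.

(* Probability of a trajectory: independent channels, each a Markov chain
   with initial law Bernoulli(omega_k(1)) and transition matrix P. *)
Definition traj_prob (R : realType) (N M : nat) (P : bool -> bool -> R)
    (Om : 'I_N -> R) (x : {ffun 'I_M -> {ffun 'I_N -> bool}}) : R :=
  \prod_(k < N) (init_prob (Om k) (ext_traj x 0 k) *
     \prod_(u < M.-1) P (ext_traj x u k) (ext_traj x u.+1 k)).

Definition traj_reward (R : realType) (N M : nat) (pol : policy)
    (s : {perm 'I_N}) (a1 : 'I_N) (x : {ffun 'I_M -> {ffun 'I_N -> bool}}) : R :=
  \sum_(u < M) ((ext_traj x u (sensed pol s a1 (ext_traj x) u) : nat)%:R).

Definition expected_reward (R : realType) (N : nat) (pol : policy)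
    (P : bool -> bool -> R) (Om : 'I_N -> R) (s : {perm 'I_N}) (a1 : 'I_N)
    (M : nat) : R :=
  \sum_(x : {ffun 'I_M -> {ffun 'I_N -> bool}})
     traj_prob P Om x * traj_reward R pol s a1 x.

(* Omega(1) is a belief vector, s encodes kappa(1) (channels sorted by
   nondecreasing belief, ties broken arbitrarily), a1 = argmax belief. *)
Definition admissible_init (R : realType) (N : nat) (Om : 'I_N -> R)
    (s : {perm 'I_N}) (a1 : 'I_N) : Prop :=
  [/\ forall k, 0 <= Om k <= 1,
      forall i j : 'I_N, (i <= j)%N -> Om (s i) <= Om (s j)
    & forall k, Om k <= Om a1].

(* Main.v *)
Require Import Defs.
From HB Require Import structures.
From mathcomp Require Import all_boot all_order all_fingroup all_algebra.
From mathcomp Require Import all_classical all_reals all_analysis.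
From mathcomp Require Import ring lra.
Import Order.TTheory GRing.Theory Num.Theory.
Import numFieldTopology.Exports numFieldNormedType.Exports.
Local Open Scope classical_set_scope.
Local Open Scope ring_scope.

Section Core.
Variables (R : realType) (n : nat) (A : 'M[R]_n.+1) (r : 'cV[R]_n.+1).

Definition E (w0 : 'rV[R]_n.+1) (p : {poly R}) (t : nat) : R :=
  (w0 *m A ^+ t *m horner_mx A p *m r) 0 0.

Lemma E_add w p q t : E w (p + q) t = E w p t + E w q t.
Proof. by rewrite /E rmorphD /= mulmxDr mulmxDl mxE. Qed.

Lemma E_opp w p t : E w (- p) t = - E w p t.
Proof. by rewrite /E rmorphN /= mulmxN mulNmx mxE. Qed.

Lemma E_sub w p q t : E w (p - q) t = E w p t - E w q t.
Proof. by rewrite E_add E_opp. Qed.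

Lemma E_C w c p t : E w (c%:P * p) t = c * E w p t.
Proof.
rewrite /E rmorphM /= horner_mx_C -mulmxE mulmxA mul_mx_scalar.
by rewrite -scalemxAl -scalemxAl mxE.
Qed.

Lemma E_X w p t : E w ('X * p) t = E w p t.+1.
Proof.
by rewrite /E rmorphM /= horner_mx_X exprSr -!mulmxE !mulmxA.
Qed.

Lemma E_0 w t : E w 0 t = 0.
Proof. by rewrite /E rmorph0 mulmx0 mul0mx mxE. Qed.

Lemma Ebound p : exists B : R, forall w, (forall t, `|E w 1 t| <= 1) ->
  forall t, `|E w p t| <= B.
Proof.
elim/poly_ind: p => [|p c [B HB]].
  by exists 0 => w _ t; rewrite E_0 normr0.
exists (B + `|c|) => w Hw t.
rewrite E_add mulrC E_X -[c%:P]mulr1 E_C.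
apply: (le_trans (ler_normD _ _)); apply: lerD; first exact: HB.
by rewrite normrM -{2}[`|c|]mulr1 ler_wpM2l.
Qed.

Lemma E_diff w q t : E w (('X - 1) * q) t = E w q t.+1 - E w q t.
Proof. by rewrite mulrBl mul1r E_sub E_X. Qed.

Lemma Lstep w q (B : R) : (forall t, `|E w q t| <= B) ->
  (forall t, E w (('X - 1) ^+ 2 * q) t = 0) ->
  forall t, E w (('X - 1) * q) t = 0.
Proof.
move=> HB H0.
have Hd : forall t, E w (('X - 1) * q) t = E w (('X - 1) * q) 0.
  elim=> // t IH; rewrite -IH; apply/eqP; rewrite -subr_eq0 -E_diff mulrA -expr2.
  by rewrite H0.
set d := E w (('X - 1) * q) 0 in Hd.
have Hf : forall t, E w q t = E w q 0 + t%:R * d.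
  elim=> [|t IH]; first by rewrite mul0r addr0.
  have := Hd t; rewrite E_diff => /eqP; rewrite subr_eq => /eqP ->.
  by rewrite IH -natr1 mulrDl mul1r; lra.
have HB0 : 0 <= B by apply: le_trans (HB 0); exact: normr_ge0.
suff d0 : d = 0 by move=> t; rewrite Hd; exact: d0.
apply/eqP; apply/negPn/negP => dn0.
have nd : 0 < `|d| by rewrite normr_gt0.
have H2 : forall t, t%:R * `|d| <= B + B.
  move=> t; have := HB t; rewrite Hf => H1.
  have H3 : `|t%:R * d| <= `|E w q 0 + t%:R * d| + `|E w q 0|.
    have := ler_normB (E w q 0 + t%:R * d) (E w q 0).
    by rewrite [X in `|X - _|]addrC addrK.
  rewrite normrM normr_nat in H3.
  apply: (le_trans H3); apply: lerD => //; exact: HB.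
have Hx : 0 <= (B + B) / `|d| by apply: divr_ge0 => //; lra.
have := archi_boundP Hx.
rewrite ltr_pdivrMr // => /lt_le_trans /(_ (H2 _)).
by rewrite ltxx.
Qed.

Lemma E_chi w t : E w (char_poly A) t = 0.
Proof. by rewrite /E Cayley_Hamilton mulmx0 mul0mx mxE. Qed.

Theorem core_S : exists K : R, 0 <= K /\ forall w0 : 'rV[R]_n.+1,
  (forall t, `|E w0 1 t| <= 1) ->
  exists c : R, forall M, `|\sum_(t < M) E w0 1 t - M%:R * c| <= K.
Proof.
have [m [h nroot Hchi]] := multiplicity_XsubC (char_poly A) 1.
have chi0 : char_poly A != 0 by apply: monic_neq0; exact: char_poly_monic.
rewrite chi0 /= in nroot.
set h1 := h.[1].
have h10 : h1 != 0 by move: nroot; rewrite /root.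
have : root (h - h1%:P) 1 by rewrite /root hornerD hornerN hornerC subrr.
move=> /factor_theorem [al Hal].
have [Ba HBa] := Ebound al.
exists ((`|Ba| + `|Ba|) / `|h1|); split.
  by apply: divr_ge0 => //; apply: addr_ge0.
move=> w0 Hw.
have Hall : forall k, (forall t, E w0 (('X - 1) ^+ k.+1 * h) t = 0) ->
    forall t, E w0 (('X - 1) * h) t = 0.
  elim=> [|k IH] H; first by move=> t; rewrite -(H t) expr1.
  apply: IH; have [B HB] := Ebound (('X - 1) ^+ k * h).
  rewrite exprS -mulrA; apply: (@Lstep w0 (('X - 1) ^+ k * h) B (HB w0 Hw)).
  by move=> t; rewrite mulrA -exprD -(H t).
have H1 : forall t, E w0 (('X - 1) * h) t = 0.
  apply: (Hall m) => t.
  have -> : ('X - 1) ^+ m.+1 * h = ('X - 1) * char_poly A.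
    by rewrite Hchi polyC1 exprS; ring.
  by rewrite E_diff !E_chi subrr.
have Hc : forall t, E w0 h t = E w0 h 0.
  elim=> // t IH; rewrite -IH; apply/eqP; rewrite -subr_eq0 -E_diff.
  by rewrite H1.
have He : forall t, h1 * E w0 1 t = E w0 h 0 - (E w0 al t.+1 - E w0 al t).
  move=> t; rewrite -E_C mulr1.
  have -> : h1%:P = h - al * ('X - 1).
    by rewrite -polyC1 -Hal; ring.
  by rewrite E_sub Hc mulrC E_diff.
have HS : forall M, (\sum_(t < M) E w0 1 t) * h1 =
    M%:R * E w0 h 0 - (E w0 al M - E w0 al 0).
  elim=> [|M IH]; first by rewrite big_ord0 mul0r subrr mul0r subr0.
  rewrite big_ord_recr /= mulrDl IH [E w0 1 M * h1]mulrC He -natr1; ring.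
exists (E w0 h 0 / h1) => M.
have -> : \sum_(t < M) E w0 1 t - M%:R * (E w0 h 0 / h1) =
    ((\sum_(t < M) E w0 1 t) * h1 - M%:R * E w0 h 0) / h1.
  by field.
rewrite HS normrM normfV; apply: ler_wpM2r; first by rewrite invr_ge0.
have -> : M%:R * E w0 h 0 - (E w0 al M - E w0 al 0) - M%:R * E w0 h 0 =
    E w0 al 0 - E w0 al M by ring.
apply: (le_trans (ler_normB _ _)); apply: lerD;
  apply: (le_trans (HBa w0 Hw _)); exact: ler_norm.
Qed.
End Core.

Lemma core_gen (R : realType) (n : nat) (A : 'M[R]_n) (r : 'cV[R]_n) :
  exists K : R, 0 <= K /\ forall w : nat -> 'rV[R]_n,
   (forall t, w t.+1 = w t *m A) -> (forall t, `|(w t *m r) 0 0| <= 1) ->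
   exists c : R, forall M, `|\sum_(t < M) (w t *m r) 0 0 - M%:R * c| <= K.
Proof.
case: n A r => [|n] A r.
  exists 0; split => // w _ _; exists 0 => M.
  rewrite big1 ?mulr0 ?subr0 ?normr0 // => t _.
  by rewrite mxE big_ord0.
have [K [K0 HK]] := @core_S R n A r.
exists K; split => // w Hw Hb.
have Hp : forall t, w t = w 0%N *m A ^+ t.
  elim=> [|t IH]; first by rewrite expr0 mulmx1.
  by rewrite Hw IH exprSr -mulmxE mulmxA.
have HE : forall t, @E R n A r (w 0%N) 1 t = (w t *m r) 0 0.
  by move=> t; rewrite /E rmorph1 mulmx1 -Hp.
have [c Hc] := HK (w 0%N) (fun t => eq_ind_r (fun x => `|x| <= 1) (Hb t) (HE t)).
exists c => M; have := Hc M; under eq_bigr do rewrite HE; done.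
Qed.

Set Implicit Arguments. Unset Strict Implicit.
Section Ext.
Variable T : finType.

Definition extf (M : nat) (y : {ffun 'I_M -> T}) (b : T) : {ffun 'I_M.+1 -> T} :=
  [ffun i : 'I_M.+1 => if unlift ord_max i is Some j then y j else b].

Lemma decomp (R : Type) (idx : R) (op : Monoid.com_law idx) (M : nat)
  (F : {ffun 'I_M.+1 -> T} -> R) :
  \big[op/idx]_(x : {ffun 'I_M.+1 -> T}) F x =
  \big[op/idx]_(y : {ffun 'I_M -> T}) \big[op/idx]_(b : T) F (extf y b).
Proof.
rewrite pair_bigA (reindex (fun p : {ffun 'I_M -> T} * T => extf p.1 p.2)) //.
apply: onW_bij.
exists (fun x : {ffun 'I_M.+1 -> T} =>
   ([ffun j : 'I_M => x (lift ord_max j)], x ord_max)).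
  case=> y b /=; congr pair; last by rewrite ffunE unlift_none.
  by apply/ffunP => j; rewrite !ffunE liftK.
move=> x /=; apply/ffunP => i; rewrite ffunE.
by case: unliftP => [j ->|->]; rewrite ?ffunE.
Qed.
Lemma decomp_sum (R : realType) (M : nat) (F : {ffun 'I_M.+1 -> T} -> R) :
  \sum_(x : {ffun 'I_M.+1 -> T}) F x =
  \sum_(y : {ffun 'I_M -> T}) \sum_(b : T) F (extf y b).
Proof. exact: decomp. Qed.
End Ext.

Section Traj.
Variable N : nat.
Notation B := {ffun 'I_N -> bool}.

Lemma ext_traj_val M (x : {ffun 'I_M -> B}) (i : 'I_M) k :
  ext_traj x (val i) k = x i k.
Proof. by rewrite /ext_traj valK. Qed.

Lemma ext_extf_lt M (y : {ffun 'I_M -> B}) b u k : (u < M)%N ->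
  ext_traj (extf y b) u k = ext_traj y u k.
Proof.
move=> hu; pose j := Ordinal hu.
have -> : u = val (lift ord_max j) by rewrite /= /bump leqNgt hu.
by rewrite ext_traj_val ffunE liftK /= /bump leqNgt hu add0n -[u]/(val j) ext_traj_val.
Qed.

Lemma ext_extf_M M (y : {ffun 'I_M -> B}) b k :
  ext_traj (extf y b) M k = b k.
Proof.
have := ext_traj_val (extf y b) ord_max k.
by rewrite ffunE unlift_none.
Qed.
End Traj.

Lemma sensed_ext N pol (s : {perm 'I_N}) a1 (x1 x2 : nat -> 'I_N -> bool) u :
  (forall v k, (v < u)%N -> x1 v k = x2 v k) ->
  sensed pol s a1 x1 u = sensed pol s a1 x2 u.
Proof.
elim: u => [|u IH] H //=.
rewrite IH; last by move=> v k hv; apply: H; exact: ltnW.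
by rewrite H.
Qed.

Section Prob.
Variables (R : realType) (N : nat) (P : bool -> bool -> R) (pol : policy)
  (s : {perm 'I_N}) (Om : 'I_N -> R) (a1 : 'I_N).
Hypothesis HP : stochastic P.
Hypothesis HOm : forall k, 0 <= Om k <= 1.
Notation B := {ffun 'I_N -> bool}.
Local Notation Z := (B * 'I_N * bool)%type.

Definition st M (x : {ffun 'I_M -> B}) (u : nat) : Z :=
  ([ffun k => ext_traj x u k], sensed pol s a1 (ext_traj x) u, odd u).

Definition nexta (z : Z) : 'I_N :=
  let: (c, a, p) := z in
  match pol with
  | Pi1 => if c a then a else succ_in s a
  | Pi2 => if c a then (if ~~ p then pred_in s a else succ_in s a) else a
  end.

Definition Q (z z' : Z) : R :=
  ((z'.1.2 == nexta z) && (z'.2 == ~~ z.2))%:R * \prod_k P (z.1.1 k) (z'.1.1 k).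

Definition rw (z : Z) : R := ((z.1.1 z.1.2 : bool) : nat)%:R.

Notation tp := (traj_prob P Om).

Lemma st_S M (x : {ffun 'I_M -> B}) u :
  st x u.+1 = ([ffun k => ext_traj x u.+1 k], nexta (st x u), ~~ odd u).
Proof. by rewrite /st /nexta /=; case: pol; rewrite ffunE. Qed.

Lemma st_extf M (y : {ffun 'I_M -> B}) b u : (u < M)%N ->
  st (extf y b) u = st y u.
Proof.
move=> hu; rewrite /st; congr (_, _, _).
  by apply/ffunP => k; rewrite !ffunE ext_extf_lt.
apply: sensed_ext => v k hv; apply: ext_extf_lt; exact: ltn_trans hu.
Qed.

Lemma tp_extf M (y : {ffun 'I_M.+1 -> B}) b :
  tp (extf y b) = tp y * \prod_k P (ext_traj y M k) (b k).
Proof.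
rewrite /traj_prob -big_split; apply: eq_bigr => k _.
rewrite big_ord_recr /= mulrA.
have hM : (M < M.+1)%N by [].
rewrite (ext_extf_lt _ _ _ (ltn0Sn M)) (ext_extf_lt _ _ _ hM) ext_extf_M.
congr (_ * _ * _); apply: eq_bigr => u _.
have h1 : (u < M.+1)%N by apply: ltnW; rewrite ltnS.
have h2 : (u.+1 < M.+1)%N by rewrite ltnS.
by rewrite (ext_extf_lt _ _ _ h1) (ext_extf_lt _ _ _ h2).
Qed.

Lemma tp_extf0 (y : {ffun 'I_0 -> B}) b :
  tp (extf y b) = \prod_k init_prob (Om k) (b k).
Proof.
rewrite /traj_prob; apply: eq_bigr => k _.
by rewrite big_ord0 mulr1 ext_extf_M.
Qed.

Lemma sum_trans (c : 'I_N -> bool) : \sum_(b : B) \prod_k P (c k) (b k) = 1.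
Proof.
rewrite -(bigA_distr_bigA (fun k (j : bool) => P (c k) j)) /=; apply: big1 => k _.
by rewrite big_bool /= addrC; case: HP => _ ->.
Qed.

Lemma tp_ge0 M (x : {ffun 'I_M -> B}) : 0 <= tp x.
Proof.
apply: prodr_ge0 => k _; apply: mulr_ge0.
  rewrite /init_prob; case: ifP => _; have := HOm k; rewrite ?subr_ge0;
  by case/andP.
by apply: prodr_ge0 => u _; case: HP.
Qed.

Lemma marg u M (G : Z -> R) : (u < M)%N ->
  \sum_(x : {ffun 'I_M -> B}) tp x * G (st x u) =
  \sum_(x : {ffun 'I_u.+1 -> B}) tp x * G (st x u).
Proof.
elim: M => // M IH; rewrite ltnS leq_eqVlt => /orP [/eqP -> //|hu].
case: M IH hu => // M IH hu.
rewrite decomp_sum -IH //; apply: eq_bigr => y _.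
under eq_bigr do rewrite tp_extf st_extf // mulrAC.
by rewrite -big_distrr /= sum_trans mulr1.
Qed.

Definition D u (z : Z) : R :=
  \sum_(x : {ffun 'I_u.+1 -> B}) tp x * (st x u == z)%:R.

Lemma regroup (X : finType) (f : X -> R) (g : X -> Z) (G : Z -> R) :
  \sum_(x : X) f x * G (g x) =
  \sum_(z : Z) (\sum_(x : X) f x * (g x == z)%:R) * G z.
Proof.
under [RHS]eq_bigr do rewrite big_distrl.
rewrite exchange_big; apply: eq_bigr => x _.
rewrite (bigD1 (g x)) //= eqxx mulr1 big1 ?addr0 // => z.
by rewrite eq_sym => /negbTE ->; rewrite mulr0 mul0r.
Qed.

Lemma sum_Q (z z' : Z) :
  \sum_(b : B) (\prod_k P (z.1.1 k) (b k)) * ((b, nexta z, ~~ z.2) == z')%:R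
  = Q z z'.
Proof.
case: z' => [[c' a'] p']; rewrite /Q /=.
rewrite (bigD1 c') //= [X in _ + X]big1 ?addr0; last first.
  by move=> b /negbTE bc; rewrite !xpair_eqE bc mulr0.
by rewrite !xpair_eqE eqxx /= mulrC [nexta z == a']eq_sym [~~ z.2 == p']eq_sym.
Qed.

Lemma Dstep u z' : D u.+1 z' = \sum_z D u z * Q z z'.
Proof.
rewrite /D -(regroup (fun x => tp x) (fun x => st x u) (fun z => Q z z')).
rewrite decomp_sum; apply: eq_bigr => y _.
under eq_bigr do rewrite tp_extf st_S st_extf //.
have Hb : forall b, [ffun k => ext_traj (extf y b) u.+1 k] = b.
  by move=> b; apply/ffunP => k; rewrite ffunE ext_extf_M.
under eq_bigr do rewrite Hb.
rewrite -sum_Q mulr_sumr; apply: eq_bigr => b _.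
rewrite mulrA; congr (_ * _ * _).
by apply: eq_bigr => k _; rewrite /st /= ffunE.
Qed.

Lemma tp_sum1 M : (0 < M)%N -> \sum_(x : {ffun 'I_M -> B}) tp x = 1.
Proof.
move=> hM.
have := marg (fun _ => 1) hM; rewrite !(eq_bigr _ (fun x _ => mulr1 (tp x))) => ->.
rewrite decomp_sum.
under eq_bigr do under eq_bigr do rewrite tp_extf0.
rewrite (eq_bigr (fun _ => 1)).
  by rewrite sumr_const card_ffun card_ord expn0.
move=> y _; rewrite -(bigA_distr_bigA (fun k (j : bool) => init_prob (Om k) j)) /=; apply: big1 => k _.
by rewrite big_bool /= /init_prob subrKC.
Qed.

Lemma D_ge0 u z : 0 <= D u z.
Proof. by apply: sumr_ge0 => x _; apply: mulr_ge0; [exact: tp_ge0|]. Qed.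

Lemma D_sum u : \sum_z D u z = 1.
Proof.
have := regroup (fun x : {ffun 'I_u.+1 -> B} => tp x) (fun x => st x u) (fun _ => 1).
rewrite !(eq_bigr _ (fun x _ => mulr1 _)) => <-.
exact: tp_sum1.
Qed.

Lemma e_bound u : `|\sum_z D u z * rw z| <= 1.
Proof.
have H : forall z, 0 <= rw z <= 1.
  by move=> z; rewrite /rw; case: (z.1.1 z.1.2) => /=; rewrite ?lexx ?ler01.
rewrite ger0_norm; last by apply: sumr_ge0 => z _; apply: mulr_ge0;
  [exact: D_ge0| by case/andP: (H z)].
rewrite -(D_sum u); apply: ler_sum => z _.
by rewrite -{2}[D u z]mulr1 ler_wpM2l ?D_ge0 //; case/andP: (H z).
Qed.

Lemma expected_eq M :
  expected_reward pol P Om s a1 M = \sum_(u < M) \sum_z D u z * rw z.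
Proof.
rewrite /expected_reward.
under eq_bigr do rewrite /traj_reward big_distrr.
rewrite exchange_big; apply: eq_bigr => u _.
rewrite (eq_bigr (fun x => tp x * rw (st x u))); last first.
  by move=> x _; rewrite /rw /st /= ffunE.
rewrite marg //; exact: regroup.
Qed.
End Prob.

Section Mat.
Variables (R : realType) (N : nat) (P : bool -> bool -> R) (pol : policy).
Local Notation Z := ({ffun 'I_N -> bool} * 'I_N * bool)%type.

Lemma sum_enum (F : Z -> R) : \sum_(i < #|{: Z}|) F (enum_val i) = \sum_(z : Z) F z.
Proof.
rewrite -(big_enum_val (A := predT)); apply: eq_bigl => z; by rewrite inE.
Qed.

Definition Am (s : {perm 'I_N}) : 'M[R]_#|{: Z}| :=
  \matrix_(i, j) Q P pol s (enum_val i) (enum_val j).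
Definition rc : 'cV[R]_#|{: Z}| := \col_i rw R (enum_val i).
Definition wv s Om a1 t : 'rV[R]_#|{: Z}| :=
  \row_j D P pol s Om a1 t (enum_val j).

Lemma wvS s Om a1 t : wv s Om a1 t.+1 = wv s Om a1 t *m Am s.
Proof.
apply/rowP => j; rewrite !mxE Dstep -sum_enum; apply: eq_bigr => i _.
by rewrite !mxE.
Qed.

Lemma wv_rc s Om a1 t :
  (wv s Om a1 t *m rc) 0 0 = \sum_(z : Z) D P pol s Om a1 t z * rw R z.
Proof. by rewrite !mxE -sum_enum; apply: eq_bigr => i _; rewrite !mxE. Qed.
End Mat.

Lemma lim_c (R : realType) (g : nat -> R) (K c U : R) :
  (forall M, `|g M - M%:R * c| <= K) ->
  (fun T : nat => g T / T%:R) @ \oo --> U -> c = U.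
Proof.
move=> Hg /cvgrPdist_lt Hl.
apply/eqP; apply/negPn/negP => cU.
set eps := `|c - U| / 2.
have e0 : 0 < eps by apply: divr_gt0 => //; rewrite normr_gt0 subr_eq0.
have [N0 _ HN] := Hl _ e0.
have K0 : 0 <= K by apply: le_trans (Hg 0%N); exact: normr_ge0.
have Hx : 0 <= K / eps by apply: divr_ge0 => //; exact: ltW.
set b := Num.Def.archi_bound (K / eps).
set T := (N0 + b).+1.
have HT : `|U - g T / T%:R| < eps.
  apply: (HN T) => /=; apply: leqW; exact: leq_addr.
have Tpos : 0 < (T%:R : R) by rewrite ltr0n.
have H1 : `|g T / T%:R - c| <= K / T%:R.
  have -> : g T / T%:R - c = (g T - T%:R * c) / T%:R.
    by field; rewrite lt0r_neq0.
  rewrite normrM normfV (ger0_norm (ltW Tpos)).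
  by apply: ler_wpM2r; [rewrite invr_ge0 ltW|exact: Hg].
have H2 : K / T%:R < eps.
  rewrite ltr_pdivrMr //.
  have := archi_boundP Hx; rewrite ltr_pdivrMr // => H3.
  apply: (lt_le_trans H3); rewrite mulrC ler_wpM2l //; first exact: ltW.
  by rewrite ler_nat /T -addSn leq_addl.
have H4 := ler_distD (g T / T%:R) c U.
rewrite distrC in H1; rewrite distrC in HT.
have H5 : `|c - U| = eps + eps by rewrite /eps; field.
lra.
Qed.

Unset Implicit Arguments.

Theorem lemma2 (R : realType) (N : nat) (P : bool -> bool -> R)
    (pol : policy) (U : R) :
  (0 < N)%N -> stochastic P ->
  (* U = U_i(P): the steady-state average reward, which (standing assumption
     of the context) exists and is independent of Omega(1) *)
  (forall (Om : 'I_N -> R) (s : {perm 'I_N}) (a1 : 'I_N),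
      admissible_init Om s a1 ->
      (fun T : nat => expected_reward pol P Om s a1 T / T%:R) @ \oo --> U) ->
  exists C : R,
    forall (Om : 'I_N -> R) (s : {perm 'I_N}) (a1 : 'I_N),
      admissible_init Om s a1 ->
      forall M : nat, (0 < M)%N ->
        `| expected_reward pol P Om s a1 M - M%:R * U | < C.
Proof.
move=> N0 HP Hlim.
have [Kf HKf] := boolp.choice (fun s : {perm 'I_N} =>
   @core_gen R _ (Am P pol s) (rc R N)).
exists (\sum_s Kf s + 1) => Om s a1 Had M M0.
have [K0 HK] := HKf s.
have HOm : forall k, 0 <= Om k <= 1 by case: Had.
have [c Hc] := HK (wv P pol s Om a1) (wvS P pol s Om a1)
  (fun t => eq_ind_r (fun x => `|x| <= 1) (@e_bound R N P pol s Om a1 HP HOm t) (wv_rc P pol s Om a1 t)).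
have Hg : forall M', `|expected_reward pol P Om s a1 M' - M'%:R * c| <= Kf s.
  move=> M'; have := Hc M'; under eq_bigr do rewrite wv_rc.
  by rewrite (@expected_eq R N P pol s Om a1 HP).
have cU := lim_c Hg (Hlim Om s a1 Had); subst c.
apply: le_lt_trans (Hg M) _.
rewrite (bigD1 s) //= -addrA ltrDl; apply: ltr_wpDl => //.
by apply: sumr_ge0 => i _; case: (HKf i).
Qed.
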